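(* Let $\varphi : X\to X$ be a morphism in $\mathscr{C}$ with kernel $\kappa : K\to X$ and cokernel $\lambda : X\to L$. Then $\varphi$ has a core inverse if and only if $\varphi$ is regular and both $\kappa\lambda : K\to L$ and $\kappa\kappa^{*} : K\to K$ are invertible. In this case, for every $\psi : X\to X$ with $\varphi\psi\varphi=\varphi$, $$\varphi^{\mathrm{core}}=[1_X-\lambda(\kappa\lambda)^{-1}\kappa]\,\psi\,[1_X-\kappa^{*}(\kappa\kappa^{*})^{-1}\kappa].$$
   Context: $\mathscr{C}$ is an additive category with an involution $*$: a map on morphisms sending $\varphi : X\to Y$ to $\varphi^* : Y \to X$ such that $(\varphi^* )^*=\varphi$, $(\varphi\psi)^*=\psi^*\varphi^*$ and $(\varphi+\phi)^*=\varphi^*+\phi^*$. Composition is written left to right: for $\varphi : X\to Y$ and $\psi : Y\to Z$, $\varphi\psi : X \to Z$ means ''first $\varphi$, then $\psi$''. A kernel of $\varphi : X\to Y$ is a morphism $\kappa : K\to X$ with $\kappa\varphi=0$ such that every $\alpha : M\to X$ with $\alpha\varphi=0$ factors uniquely as $\alpha=\alpha'\kappa$. A cokernel of $\varphi$ is a morphism $\lambda : Y\to L$ with $\varphi\lambda=0$ such that every $\beta : Y\to M$ with $\varphi\beta=0$ factors uniquely as $\beta=\lambda\beta'$. $\varphi$ is regular if there is $\chi$ with $\varphi\chi\varphi=\varphi$. A morphism is invertible if it has a two-sided inverse. For $\varphi : X\to X$, a core inverse of $\varphi$ is a morphism $\chi : X\to X$ with $(\varphi\chi)^*=\varphi\chi$,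 $\varphi\chi^2=\chi$ and $\chi\varphi^2=\varphi$. It is unique when it exists and is denoted $\varphi^{\mathrm{core}}$. *)

(* Defs.v *)
From HB Require Import structures.
From mathcomp Require Import all_boot all_algebra.
Set Implicit Arguments. Unset Strict Implicit. Unset Printing Implicit Defensive.
Import GRing.Theory.
Local Open Scope ring_scope.

(* An additive category with involution.  Composition is written in
   diagrammatic (left-to-right) order: [mcomp f g] = "first f, then g". *)
Record AddCatInv := {
  Obj : Type;
  Mor : Obj -> Obj -> zmodType;
  idmor : forall X, Mor X X;
  mcomp : forall X Y Z, Mor X Y -> Mor Y Z -> Mor X Z;
  compA : forall X Y Z W (f : Mor X Y) (g : Mor Y Z) (h : Mor Z W),
      mcomp (mcomp f g) h = mcomp f (mcomp g h);
  comp1m : forall X Y (f : Mor X Y), mcomp (idmor X) f = f;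
  compm1 : forall X Y (f : Mor X Y), mcomp f (idmor Y) = f;
  compDl : forall X Y Z (f g : Mor X Y) (h : Mor Y Z),
      mcomp (f + g) h = mcomp f h + mcomp g h;
  compDr : forall X Y Z (f : Mor X Y) (g h : Mor Y Z),
      mcomp f (g + h) = mcomp f g + mcomp f h;
  zero_obj : exists Z : Obj, forall X,
      (forall f : Mor X Z, f = 0) /\ (forall f : Mor Z X, f = 0);
  biprod : forall X Y, exists (P : Obj) (i1 : Mor X P) (i2 : Mor Y P)
      (p1 : Mor P X) (p2 : Mor P Y),
      [/\ mcomp i1 p1 = idmor X, mcomp i2 p2 = idmor Y, mcomp i1 p2 = 0,
          mcomp i2 p1 = 0 & mcomp p1 i1 + mcomp p2 i2 = idmor P];
  mstar : forall X Y, Mor X Y -> Mor Y X;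
  starK : forall X Y (f : Mor X Y), mstar (mstar f) = f;
  star_comp : forall X Y Z (f : Mor X Y) (g : Mor Y Z),
      mstar (mcomp f g) = mcomp (mstar g) (mstar f);
  starD : forall X Y (f g : Mor X Y), mstar (f + g) = mstar f + mstar g
}.

Arguments idmor {a} X.
Arguments mcomp {a X Y Z}.
Arguments mstar {a X Y}.

Section Defs.
Variable C : AddCatInv.

Definition is_kernel (X Y K : Obj C) (phi : Mor X Y) (kappa : Mor K X) : Prop :=
  mcomp kappa phi = 0 /\
  forall (M : Obj C) (alpha : Mor M X), mcomp alpha phi = 0 ->
    exists! alpha' : Mor M K, alpha = mcomp alpha' kappa.

Definition is_cokernel (X Y L : Obj C) (phi : Mor X Y) (lambda : Mor Y L) : Prop :=
  mcomp phi lambda = 0 /\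
  forall (M : Obj C) (beta : Mor Y M), mcomp phi beta = 0 ->
    exists! beta' : Mor L M, beta = mcomp lambda beta'.

Definition regular (X Y : Obj C) (phi : Mor X Y) : Prop :=
  exists chi : Mor Y X, mcomp (mcomp phi chi) phi = phi.

Definition is_inverse (X Y : Obj C) (f : Mor X Y) (g : Mor Y X) : Prop :=
  mcomp f g = idmor X /\ mcomp g f = idmor Y.

Definition invertible (X Y : Obj C) (f : Mor X Y) : Prop :=
  exists g : Mor Y X, is_inverse f g.

Definition is_core_inverse (X : Obj C) (phi chi : Mor X X) : Prop :=
  [/\ mstar (mcomp phi chi) = mcomp phi chi,
      mcomp phi (mcomp chi chi) = chi &
      mcomp chi (mcomp phi phi) = phi].

Definition has_core_inverse (X : Obj C) (phi : Mor X X) : Prop :=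
  exists chi, is_core_inverse phi chi.

End Defs.

(* Main.v *)
Require Import Defs.
From HB Require Import structures.
From mathcomp Require Import all_boot all_algebra.
Import GRing.Theory.
Local Open Scope ring_scope.
Set Implicit Arguments.

Lemma mcompA {C : AddCatInv} {X Y Z W : Obj C} (f : Mor X Y) (g : Mor Y Z) (h : Mor Z W) :
  mcomp (mcomp f g) h = mcomp f (mcomp g h).
Proof. exact: Defs.compA. Qed.

Lemma comp0m (C : AddCatInv) (X Y Z : Obj C) (f : Mor Y Z) :
  mcomp (0 : Mor X Y) f = 0.
Proof.
have H := compDl (0 : Mor X Y) 0 f; rewrite addr0 in H.
by apply: (@addrI _ (mcomp 0 f)); rewrite -H addr0.
Qed.

Lemma compm0 (C : AddCatInv) (X Y Z : Obj C) (f : Mor X Y) :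
  mcomp f (0 : Mor Y Z) = 0.
Proof.
have H := compDr f (0 : Mor Y Z) 0; rewrite addr0 in H.
by apply: (@addrI _ (mcomp f 0)); rewrite -H addr0.
Qed.

Lemma compNl (C : AddCatInv) (X Y Z : Obj C) (f : Mor X Y) (g : Mor Y Z) :
  mcomp (- f) g = - mcomp f g.
Proof. by apply: (@addrI _ (mcomp f g)); rewrite -compDl !subrr comp0m. Qed.

Lemma compNr (C : AddCatInv) (X Y Z : Obj C) (f : Mor X Y) (g : Mor Y Z) :
  mcomp f (- g) = - mcomp f g.
Proof. by apply: (@addrI _ (mcomp f g)); rewrite -compDr !subrr compm0. Qed.

Lemma compBl (C : AddCatInv) (X Y Z : Obj C) (f g : Mor X Y) (h : Mor Y Z) :
  mcomp (f - g) h = mcomp f h - mcomp g h.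
Proof. by rewrite compDl compNl. Qed.

Lemma compBr (C : AddCatInv) (X Y Z : Obj C) (f : Mor X Y) (g h : Mor Y Z) :
  mcomp f (g - h) = mcomp f g - mcomp f h.
Proof. by rewrite compDr compNr. Qed.

Lemma star0 (C : AddCatInv) (X Y : Obj C) : mstar (0 : Mor X Y) = 0.
Proof.
have H := starD (0 : Mor X Y) 0; rewrite addr0 in H.
by apply: (@addrI _ (mstar (0 : Mor X Y))); rewrite -H addr0.
Qed.

Lemma starN (C : AddCatInv) (X Y : Obj C) (f : Mor X Y) : mstar (- f) = - mstar f.
Proof. by apply: (@addrI _ (mstar f)); rewrite -starD !subrr star0. Qed.

Lemma starB (C : AddCatInv) (X Y : Obj C) (f g : Mor X Y) :
  mstar (f - g) = mstar f - mstar g.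
Proof. by rewrite starD starN. Qed.

Lemma star1 (C : AddCatInv) (X : Obj C) : mstar (idmor X) = idmor X.
Proof.
have H : mstar (idmor X) = mcomp (idmor X) (mstar (idmor X)) by rewrite comp1m.
have := f_equal mstar H; rewrite starK star_comp starK comp1m => <-.
by [].
Qed.

Lemma kernel_mono (C : AddCatInv) (X Y K : Obj C) (phi : Mor X Y) (kappa : Mor K X) :
  is_kernel phi kappa -> forall M (f g : Mor M K), mcomp f kappa = mcomp g kappa -> f = g.
Proof.
move=> [H0 H] M f g E.
have [|a [_ Hu]] := H M (mcomp g kappa); first by rewrite mcompA H0 compm0.
by rewrite -(Hu f) // (Hu g).
Qed.

Lemma kernel_fact (C : AddCatInv) (X Y K : Obj C) (phi : Mor X Y) (kappa : Mor K X) :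
  is_kernel phi kappa -> forall M (al : Mor M X), mcomp al phi = 0 ->
  exists a, al = mcomp a kappa.
Proof. by move=> [H0 H] M al E; have [a [Ha _]] := H M al E; exists a. Qed.

Lemma cokernel_epi (C : AddCatInv) (X Y L : Obj C) (phi : Mor X Y) (lambda : Mor Y L) :
  is_cokernel phi lambda -> forall M (f g : Mor L M), mcomp lambda f = mcomp lambda g -> f = g.
Proof.
move=> [H0 H] M f g E.
have [|a [_ Hu]] := H M (mcomp lambda g); first by rewrite -mcompA H0 comp0m.
by rewrite -(Hu f) // (Hu g).
Qed.

Lemma cokernel_fact (C : AddCatInv) (X Y L : Obj C) (phi : Mor X Y) (lambda : Mor Y L) :
  is_cokernel phi lambda -> forall M (be : Mor Y M), mcomp phi be = 0 ->
  exists b, be = mcomp lambda b.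
Proof. by move=> [H0 H] M be E; have [b [Hb _]] := H M be E; exists b. Qed.

Unset Implicit Arguments.

Theorem theorem3p3 (C : AddCatInv) (X K L : Obj C) (phi : Mor X X)
    (kappa : Mor K X) (lambda : Mor X L) :
  is_kernel phi kappa -> is_cokernel phi lambda ->
  (has_core_inverse phi <->
     [/\ regular phi, invertible (mcomp kappa lambda)
       & invertible (mcomp kappa (mstar kappa))]) /\
  (has_core_inverse phi ->
   forall (psi : Mor X X), mcomp (mcomp phi psi) phi = phi ->
   forall (u : Mor L K) (v : Mor K K),
     is_inverse (mcomp kappa lambda) u ->
     is_inverse (mcomp kappa (mstar kappa)) v ->
     is_core_inverse phi
       (mcomp (mcomp (idmor X - mcomp lambda (mcomp u kappa)) psi)
             (idmor X - mcomp (mstar kappa) (mcomp v kappa)))).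
Proof.
move=> Hk Hc.
have k0 : mcomp kappa phi = 0 by case: Hk.
have l0 : mcomp phi lambda = 0 by case: Hc.
have main : forall (psi : Mor X X), mcomp (mcomp phi psi) phi = phi ->
   forall (u : Mor L K) (v : Mor K K),
     is_inverse (mcomp kappa lambda) u ->
     is_inverse (mcomp kappa (mstar kappa)) v ->
     is_core_inverse phi
       (mcomp (mcomp (idmor X - mcomp lambda (mcomp u kappa)) psi)
             (idmor X - mcomp (mstar kappa) (mcomp v kappa))).
  move=> psi Hpsi u v [u1 u2] [v1 v2].
  set P := idmor X - _; set Q := idmor X - _.
  have vs : mstar v = v.
    have E : mcomp (mstar v) (mcomp kappa (mstar kappa)) = idmor K.
      by have := f_equal mstar v1; rewrite star1 !star_comp starK.
    by rewrite -[mstar v]compm1 -v1 -mcompA E comp1m.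
  have Qs : mstar Q = Q by rewrite /Q starB star1 !star_comp starK vs mcompA.
  have kQ : mcomp kappa Q = 0.
    by rewrite /Q compBr compm1 -!mcompA v1 comp1m subrr.
  have kP : mcomp kappa P = 0.
    by rewrite /P compBr compm1 -(mcompA kappa lambda) -mcompA u1 comp1m subrr.
  have Pphi : mcomp P phi = phi.
    by rewrite /P compBl comp1m !mcompA k0 !compm0 subr0.
  have phiP : mcomp phi P = phi.
    by rewrite /P compBr compm1 -mcompA l0 comp0m subr0.
  have Qphi : mcomp Q phi = phi.
    by rewrite /Q compBl comp1m !mcompA k0 !compm0 subr0.
  have Plam : mcomp P lambda = 0.
    by rewrite /P compBl comp1m !mcompA u2 compm1 subrr.
  have [|d Hd] := kernel_fact Hk _ (idmor X - mcomp phi psi).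
    by rewrite compBl comp1m Hpsi subrr.
  have [|e He] := cokernel_fact Hc _ (idmor X - mcomp psi phi).
    by rewrite compBr compm1 -mcompA Hpsi subrr.
  have phichi : mcomp phi (mcomp (mcomp P psi) Q) = Q.
    rewrite -!mcompA phiP.
    have -> : mcomp phi psi = idmor X - mcomp d kappa by rewrite -Hd opprB addrC subrK.
    by rewrite compBl comp1m mcompA kQ compm0 subr0.
  have chiphi : mcomp (mcomp (mcomp P psi) Q) phi = P.
    rewrite mcompA Qphi mcompA.
    have -> : mcomp psi phi = idmor X - mcomp lambda e by rewrite -He opprB addrC subrK.
    by rewrite compBr compm1 -mcompA Plam comp0m subr0.
  have kchi : mcomp kappa (mcomp (mcomp P psi) Q) = 0.
    by rewrite -!mcompA kP !comp0m.
  split.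
  - by rewrite phichi.
  - by rewrite -mcompA phichi {1}/Q compBl comp1m (mcompA (mstar kappa)) (mcompA v) kchi !compm0 subr0.
  - by rewrite -mcompA chiphi.
split; last by move=> _; exact: main.
split.
  move=> [chi [H1 H2 H3]].
  have e1 : mcomp (mcomp phi chi) chi = chi by rewrite mcompA.
  have e2 : mcomp (mcomp phi chi) phi = phi.
    by rewrite -{2}H3 -mcompA e1 H3.
  have e3 : mcomp phi (mcomp chi (mcomp chi phi)) = mcomp chi phi.
    by rewrite -mcompA -mcompA e1.
  have kcp : mcomp kappa (mcomp chi phi) = 0.
    by rewrite -e3 -mcompA k0 comp0m.
  have [|a Ha] := kernel_fact Hk _ (idmor X - mcomp chi phi).
    by rewrite compBl comp1m mcompA H3 subrr.
  have [|b Hb] := cokernel_fact Hc _ (idmor X - mcomp chi phi).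
    by rewrite compBr compm1 -mcompA e2 subrr.
  have ka : mcomp kappa a = idmor K.
    apply: (kernel_mono Hk); rewrite mcompA -Ha comp1m.
    by rewrite compBr compm1 kcp subr0.
  have bl : mcomp b lambda = idmor L.
    apply: (cokernel_epi Hc); rewrite -mcompA -Hb compm1.
    by rewrite compBl comp1m mcompA l0 compm0 subr0.
  have [|c Hcc] := kernel_fact Hk _ (idmor X - mcomp phi chi).
    by rewrite compBl comp1m e2 subrr.
  have kc : mcomp kappa c = idmor K.
    apply: (kernel_mono Hk); rewrite mcompA -Hcc comp1m.
    by rewrite compBr compm1 -mcompA k0 comp0m subr0.
  have cs : mcomp c kappa = mcomp (mstar kappa) (mstar c).
    by rewrite -star_comp -Hcc starB star1 H1.
  have cs2 : mcomp (mstar c) (mstar kappa) = idmor K.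
    by rewrite -star_comp kc star1.
  split.
  - by exists chi.
  - exists (mcomp b a); split.
    + by rewrite mcompA -(mcompA lambda) -Hb compBl comp1m compBr -(mcompA kappa (mcomp chi phi)) kcp comp0m subr0 ka.
    + by rewrite mcompA -(mcompA a) -Ha compBl comp1m mcompA l0 compm0 subr0 bl.
  - exists (mcomp (mstar c) c); split.
    + by rewrite mcompA -(mcompA (mstar kappa)) -cs -!mcompA kc comp1m kc.
    + by rewrite mcompA -(mcompA c) cs -!mcompA cs2 comp1m cs2.
move=> [[psi Hpsi] [u Hu] [v Hv]].
by eexists; exact: (main psi Hpsi u v Hu Hv).
Qed.
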